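(* Let $T$ be a real $n\times n$ orthogonal projection matrix (symmetric, $T^2=T$) of rank $k$ whose diagonal entries are all equal. Then for every $0<m<n$, every principal $m\times m$ submatrix $T'$ of $T$ satisfies $\operatorname{rank}(T')\ge m\cdot k/n$. *)

(* Defs.v *)
From mathcomp Require Import all_boot all_order all_algebra.
From mathcomp Require Import reals.
Set Implicit Arguments. Unset Strict Implicit. Unset Printing Implicit Defensive.

(* Main.v *)
Require Import Defs.
From mathcomp Require Import all_boot all_order all_algebra.
From mathcomp Require Import reals.
Import Order.TTheory GRing.Theory Num.Theory.
Local Open Scope ring_scope.

Lemma tr_idem (F : fieldType) n (E : 'M[F]_n) : E *m E = E -> \tr E = (\rank E)%:R.
Proof.
move=> EE.
have hb := mulmx_base E.
set C := col_base E in hb; set D := row_base E in hb.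
have DC : D *m C = 1%:M.
  have h0 : C *m (D *m C - 1%:M) *m D = 0.
    by rewrite mulmxBr mulmx1 mulmxBl (mulmxA C D C) hb -(mulmxA E C D) hb EE subrr.
  move/eqP: h0; rewrite mulmx_free_eq0 ?row_base_free // => /eqP h1.
  have : (D *m C - 1%:M)^T *m C^T = 0 by rewrite -trmx_mul h1 trmx0.
  move/eqP; rewrite mulmx_free_eq0; last first.
    by rewrite /row_free mxrank_tr; move: (col_base_full E); rewrite /row_full.
  by rewrite trmx_eq0 subr_eq0 => /eqP.
by rewrite -{1}hb mxtrace_mulC DC mxtrace1.
Qed.

Section RealStuff.
Variable R : realFieldType.

Lemma mulmx_tr_diag m n (X : 'M[R]_(m,n)) i : (X *m X^T) i i = \sum_j X i j ^+ 2.
Proof. by rewrite !mxE; apply: eq_bigr => j _; rewrite mxE expr2. Qed.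

Lemma tr_mulmx_tr_ge0 m n (X : 'M[R]_(m,n)) : 0 <= \tr (X *m X^T).
Proof.
rewrite /mxtrace; apply: sumr_ge0 => i _; rewrite mulmx_tr_diag.
by apply: sumr_ge0 => j _; exact: sqr_ge0.
Qed.

Lemma mulmx_tr_eq0 m n (X : 'M[R]_(m,n)) : X *m X^T = 0 -> X = 0.
Proof.
move=> H; apply/matrixP => i j; have := congr1 (fun M : 'M_m => M i i) H.
rewrite mulmx_tr_diag mxE => /psumr_eq0P h.
have := h (fun j _ => sqr_ge0 (X i j)) j isT.
by rewrite mxE => /eqP; rewrite sqrf_eq0 => /eqP.
Qed.

End RealStuff.

Theorem corollary4p12 (R : realType) (n k : nat) (T : 'M[R]_n) :
  T^T = T -> T *m T = T -> \rank T = k ->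
  (forall i j : 'I_n, T i i = T j j) ->
  forall (m : nat), (0 < m)%N -> (m < n)%N ->
  forall f : 'I_m -> 'I_n, injective f ->
    (m%:R * k%:R / n%:R : R) <= (\rank (mxsub f f T))%:R.
Proof.
move=> Tsym TT rk Tdiag m m0 mn f finj.
set S := mxsub f f T.
have n0 : (0 < n)%N by apply: ltn_trans mn.
pose i0 : 'I_n := f (Ordinal m0).
set d := T i0 i0.
have trT : \tr T = n%:R * d.
  rewrite /mxtrace (eq_bigr (fun _ => d)) => [|i _]; last exact: (Tdiag i i0).
  by rewrite sumr_const card_ord mulr_natl.
have trT' : \tr T = k%:R by rewrite tr_idem // rk.
have trS : \tr S = m%:R * d.
  rewrite /mxtrace (eq_bigr (fun _ => d)) => [|i _]; last by rewrite mxE (Tdiag _ i0).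
  by rewrite sumr_const card_ord mulr_natl.
have lhs : m%:R * k%:R / n%:R = \tr S.
  rewrite trS -trT' trT [n%:R * d]mulrC mulrA mulfK // pnatr_eq0 -lt0n //.
have Ssym : S^T = S by apply/matrixP => i j; rewrite !mxE -{1}Tsym mxE.
set G := rowsub f (1%:M - T).
have ISG : 1%:M - S = G *m G^T.
  have h1 : (1%:M - T)^T = 1%:M - T by rewrite linearB /= trmx1 Tsym.
  have h2 : (1%:M - T) *m (1%:M - T)^T = 1%:M - T.
    by rewrite h1 mulmxBr mulmx1 mulmxBl mul1mx TT subrr subr0.
  have h3 : G^T = colsub f (1%:M - T)^T by apply/matrixP => i j; rewrite !mxE.
  rewrite h3 -mxsub_mul h2; apply/matrixP => i j; rewrite !mxE (inj_eq finj) //.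
set K := kermx S.
have capS : (S :&: K)%MS = 0.
  set X := (S :&: K)%MS.
  have /submxP [W XW] : (X <= S)%MS := capmxSl _ _.
  have XK : X *m S = 0 by apply/sub_kermxP; exact: capmxSr.
  by apply: mulmx_tr_eq0; rewrite {2}XW trmx_mul Ssym mulmxA XK mul0mx.
have full : (1%:M <= S + K)%MS.
  apply: submx_full; rewrite /row_full mxrank_disjoint_sum // mxrank_ker subnKC //.
  exact: rank_leq_row.
set E := proj_mx S K.
have ES : S *m E = S := proj_mx_id capS (submx_refl S).
have Esub : (E <= S)%MS by have := proj_mx_sub S K 1%:M; rewrite mul1mx.
have EE : E *m E = E := proj_mx_id capS Esub.
have Ecompl : (1%:M - E <= K)%MS by have := proj_mx_compl_sub full; rewrite mul1mx.
have Esym : E^T = E.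
  have h1 : (1%:M - E) *m S = 0 by apply/sub_kermxP.
  have /submxP [W EW] := Esub.
  have h2 : (1%:M - E) *m E^T = 0.
    by rewrite {2}EW trmx_mul Ssym mulmxA h1 mul0mx.
  have h3 : E^T = E *m E^T by move/eqP: h2; rewrite mulmxBl mul1mx subr_eq0 => /eqP.
  have h4 : (E *m E^T)^T = E *m E^T by rewrite trmx_mul trmxK.
  by rewrite -[RHS]trmxK h3 h4 -h3.
have SE : E *m S = S by rewrite -{1}Esym -{1}Ssym -trmx_mul ES Ssym.
have key : (E *m G) *m (E *m G)^T = E - S.
  rewrite trmx_mul Esym mulmxA -(mulmxA E G) -ISG mulmxBr mulmx1 mulmxBl EE SE ES //.
rewrite lhs; apply: (le_trans (y := \tr E)).
  by rewrite -subr_ge0 -linearB /= -key tr_mulmx_tr_ge0.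
by rewrite tr_idem // ler_nat mxrankS.
Qed.
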